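(* Let $V$ be an infinite-dimensional vector space over a field $\mathbb{F}$ and $u\in\mathrm{End}(V)$. Assume that $u$ has a dominant eigenvalue $\lambda$ and that $u-\lambda\,\mathrm{id}_V$ has infinite rank. Then there exists a decomposition $V=V_1\oplus V_2$ into linear subspaces stable under $u$ such that: (i) $V_1$ is infinite-dimensional; (ii) the endomorphism $u_{|V_1}$ of $V_1$ has no dominant eigenvalue; (iii) $u(x)=\lambda x$ for all $x\in V_2$.
   Context: For an endomorphism $f$ of an infinite-dimensional vector space $E$, a scalar $\mu$ is a dominant eigenvalue of $f$ if $\operatorname{rk}(f-\mu\,\mathrm{id}_E)<\dim E$. *)

(* Defs.v *)
From HB Require Import structures.
From mathcomp Require Import all_boot all_order all_algebra.
From mathcomp Require Import boolp classical_sets functions cardinality.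
Set Implicit Arguments. Unset Strict Implicit. Unset Printing Implicit Defensive.
Import GRing.Theory.
Local Open Scope ring_scope.
Local Open Scope classical_set_scope.

Definition subspace (F : fieldType) (V : lmodType F) (W : set V) : Prop :=
  W 0 /\ (forall x y, W x -> W y -> W (x + y)) /\
  (forall (a : F) x, W x -> W (a *: x)).

Definition span (F : fieldType) (V : lmodType F) (S : set V) : set V :=
  [set v | exists (s : seq V) (c : V -> F),
      (forall x, x \in s -> S x) /\ v = \sum_(x <- s) c x *: x].

Definition lin_indep (F : fieldType) (V : lmodType F) (S : set V) : Prop :=
  forall (s : seq V) (c : V -> F), uniq s -> (forall x, x \in s -> S x) ->
    \sum_(x <- s) c x *: x = 0 -> forall x, x \in s -> c x = 0.

Definition is_basis (F : fieldType) (V : lmodType F) (W B : set V) : Prop :=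
  B `<=` W /\ lin_indep B /\ span B = W.

(* dim W1 < dim W2 (as cardinals), measured through bases
   (basis cardinality is independent of the chosen basis). *)
Definition dim_lt (F : fieldType) (V : lmodType F) (W1 W2 : set V) : Prop :=
  exists B1 B2, is_basis W1 B1 /\ is_basis W2 B2 /\
    (card_le B1 B2 /\ ~ card_le B2 B1).

Definition infinite_dim (F : fieldType) (V : lmodType F) (W : set V) : Prop :=
  exists B, is_basis W B /\ infinite_set B.

Definition shifted_image (F : fieldType) (V : lmodType F)
    (f : V -> V) (mu : F) (W : set V) : set V :=
  [set f x - mu *: x | x in W].

(* mu is a dominant eigenvalue of the endomorphism f restricted to the
   (f-stable) subspace W:  rk((f - mu id)|_W) < dim W. *)
Definition dominant_eigenvalue_on (F : fieldType) (V : lmodType F)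
    (f : V -> V) (W : set V) (mu : F) : Prop :=
  dim_lt (shifted_image f mu W) W.

(* Main.v *)
Require Import Defs.
From HB Require Import structures.
From mathcomp Require Import all_boot all_order all_algebra.
From mathcomp Require Import boolp classical_sets functions cardinality.
From Stdlib Require Cantor.
Import GRing.Theory.
Local Open Scope ring_scope.
Local Open Scope classical_set_scope.

(* Proof overview: Hamel-basis linear algebra with Zorn's lemma (basis
   extension, complements), cardinal arithmetic (kappa * omega <= kappa for
   infinite kappa, comparability of cardinals), then the construction
   V1 = span (B1 u c(B1) u Z), V2 = complement of V1 inside ker (u - lambda). *)

Set Implicit Arguments. Unset Strict Implicit.

Section LinAlg.
Variables (F : fieldType) (V : lmodType F).
Implicit Types (S A B : set V).

Definition span2 S : set V :=
  [set v | exists t : seq (F * V), (forall p, p \in t -> S p.2) /\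
     v = \sum_(p <- t) p.1 *: p.2].

Lemma sum_pick (T : eqType) (s : seq T) (y : T) (a : V) :
  uniq s -> y \in s -> \sum_(x <- s) (if y == x then a else 0) = a.
Proof.
move=> us ys; rewrite (big_rem y ys) eqxx big1_seq; first by apply: addr0.
move=> x /andP[_ xr].
case: eqP => // yx; move: xr; rewrite -yx mem_rem_uniq //.
by rewrite inE eqxx.
Qed.

Lemma sum_undup (t : seq (F * V)) :
  \sum_(x <- undup (map snd t)) (\sum_(p <- t | p.2 == x) p.1) *: x =
  \sum_(p <- t) p.1 *: p.2.
Proof.
under eq_bigr => x _ do rewrite scaler_suml.
under eq_bigr => x _ do rewrite big_mkcond.
rewrite exchange_big /= big_seq [RHS]big_seq; apply: eq_bigr => p pt.
have pin : p.2 \in undup (map snd t) by rewrite mem_undup; apply: map_f.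
rewrite -(@sum_pick _ _ _ (p.1 *: p.2) (undup_uniq _) pin).
by apply: eq_bigr => x _; case: eqP => // ->.
Qed.

Lemma span_span2 S : Defs.span S = span2 S.
Proof.
rewrite eqEsubset; split => v.
  case=> s [c [sS ->]]; exists (map (fun x => (c x, x)) s); split.
    by move=> p /mapP[x xs ->]; exact: sS.
  by rewrite big_map.
case=> t [tS ->]; exists (undup (map snd t)), (fun x => \sum_(p <- t | p.2 == x) p.1).
split; last by rewrite sum_undup.
by move=> x; rewrite mem_undup => /mapP[p pt ->]; exact: tS.
Qed.

Lemma span2_uniq S v : span2 S v -> exists s (c : V -> F),
  [/\ uniq s, (forall x, x \in s -> S x) & v = \sum_(x <- s) c x *: x].
Proof.
case=> t [tS ->]; exists (undup (map snd t)), (fun x => \sum_(p <- t | p.2 == x) p.1).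
split; [exact: undup_uniq| |by rewrite sum_undup].
by move=> x; rewrite mem_undup => /mapP[p pt ->]; exact: tS.
Qed.

Lemma span2_0 S : span2 S 0.
Proof. by exists [::]; split => //; rewrite big_nil. Qed.

Lemma span2_add S x y : span2 S x -> span2 S y -> span2 S (x + y).
Proof.
case=> t1 [t1S ->] [t2 [t2S ->]]; exists (t1 ++ t2); split; last by rewrite big_cat.
by move=> p; rewrite mem_cat => /orP[/t1S|/t2S].
Qed.

Lemma span2_scale S (a : F) x : span2 S x -> span2 S (a *: x).
Proof.
case=> t [tS ->]; exists (map (fun p => (a * p.1, p.2)) t); split.
  by move=> p /mapP[q qt ->] /=; apply: tS.
by rewrite big_map scaler_sumr; apply: eq_bigr => p _; rewrite scalerA.
Qed.

Lemma span2_sub S x : S x -> span2 S x.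
Proof. by move=> Sx; exists [:: ((1:F), x)]; split; [move=> p; rewrite inE => /eqP->|rewrite big_seq1 /= scale1r]. Qed.

Lemma span2_opp S x : span2 S x -> span2 S (- x).
Proof. by move=> /(span2_scale (-1)); rewrite scaleN1r. Qed.

Lemma span2_sum S (I : eqType) (r : seq I) (G : I -> V) :
  (forall i, i \in r -> span2 S (G i)) -> span2 S (\sum_(i <- r) G i).
Proof.
elim: r => [|i r IH] H; first by rewrite big_nil; exact: span2_0.
rewrite big_cons; apply: span2_add; first by apply: H; rewrite inE eqxx.
by apply: IH => j jr; apply: H; rewrite inE jr orbT.
Qed.

Lemma span2_closed S S' : S `<=` span2 S' -> span2 S `<=` span2 S'.
Proof.
move=> SS' v [t [tS ->]]; apply: span2_sum => p pt; apply: span2_scale.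
exact/SS'/tS.
Qed.

Lemma span2_mono S S' : S `<=` S' -> span2 S `<=` span2 S'.
Proof. by move=> SS'; apply: span2_closed => x /SS'; exact: span2_sub. Qed.

Lemma span2_subspace S : subspace (span2 S).
Proof.
split; first exact: span2_0.
by split=> [x y|a x]; [exact: span2_add|exact: span2_scale].
Qed.

Lemma subspace_span2 S W : subspace W -> S `<=` W -> span2 S `<=` W.
Proof.
case=> W0 [Wadd Wsc] SW v [t [tS ->]].
elim: t tS => [|p t IH] tS; first by rewrite big_nil.
rewrite big_cons; apply: Wadd; first by apply/Wsc/SW/tS; rewrite inE eqxx.
by apply: IH => q qt; apply: tS; rewrite inE qt orbT.
Qed.

Lemma span2_lin (f : {linear V -> V}) S v :
  span2 S v -> span2 (f @` S) (f v).
Proof.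
case=> t [tS ->]; rewrite linear_sum; exists (map (fun p => (p.1, f p.2)) t).
split; first by move=> p /mapP[q qt ->] /=; exists q.2 => //; exact: tS.
by rewrite big_map; apply: eq_bigr => p _; rewrite linearZ.
Qed.

Lemma indep_sub A B : A `<=` B -> lin_indep B -> lin_indep A.
Proof. by move=> AB iB s c us sA; apply: iB => // x /sA /AB. Qed.

Lemma indep_add A y : lin_indep A -> ~ span2 A y -> lin_indep (A `|` [set y]).
Proof.
move=> iA nsy s c us sAy s0.
have [ys|nys] := boolP (y \in s); last first.
  apply: iA => // x xs; case: (sAy x xs) => // /= xy.
  by move: nys; rewrite -xy xs.
have urem : uniq (rem y s) by exact: rem_uniq.
have remA : forall x, x \in rem y s -> A x.
  move=> x; rewrite mem_rem_uniq // inE => /andP[xy xs].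
  by case: (sAy x xs) => // /= /eqP; rewrite (negbTE xy).
move: s0; rewrite (big_rem y ys) => s0.
have cy : c y = 0.
  apply: contra_notP nsy => cy0.
  have -> : y = - (c y)^-1 *: \sum_(x <- rem y s) c x *: x.
    have cy0n : c y != 0 by apply/eqP.
    apply: (scalerI cy0n); rewrite scalerA mulrN divff // scaleN1r.
    by apply/eqP; rewrite -addr_eq0 s0.
  by apply/span2_scale/span2_sum => x xr; apply/span2_scale/span2_sub/remA.
move: s0; rewrite cy scale0r /= add0r => s0 x xs.
have [-> //|xy] := eqVneq x y.
by apply: (iA _ _ urem remA s0); rewrite mem_rem_uniq // inE xy.
Qed.

Lemma indep_notin A q : lin_indep A -> A q -> ~ span2 (A `\ q) q.
Proof.
move=> iA Aq /span2_uniq[s [c [us sA qE]]].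
have qs : q \notin s by apply/negP => /sA [_]; apply.
pose c' x := if x == q then -1 else c x.
have : c' q = 0.
  apply: (iA (q :: s)); rewrite ?cons_uniq ?qs //.
    by move=> x; rewrite inE => /orP[/eqP->//|/sA[]].
  rewrite big_cons /c' eqxx scaleN1r.
  rewrite (eq_big_seq (fun x => c x *: x)) -?qE ?addNr // => x xs.
  by case: eqP => // xq; move: qs; rewrite -xq xs.
  by rewrite inE eqxx.
by rewrite /c' eqxx => /eqP; rewrite oppr_eq0 oner_eq0.
Qed.


Lemma chain_seq (T : eqType) (J : set T) (Fm : set (set T)) (s : seq T) :
  total_on Fm subset ->
  (forall x, x \in s -> (J `|` \bigcup_(X in Fm) X) x) ->
  exists X, (X = set0 \/ Fm X) /\ forall x, x \in s -> (J `|` X) x.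
Proof.
move=> tot; elim: s => [|y s IH] H.
  by exists set0; split; [left|].
have [X [X0 Xs]] : exists X, (X = set0 \/ Fm X) /\ forall x, x \in s -> (J `|` X) x.
  by apply: IH => x xs; apply: H; rewrite inE xs orbT.
case: (H y (mem_head _ _)) => [Jy|[Y FY Yy]].
  by exists X; split => // x; rewrite inE => /orP[/eqP->|xs]; [left|exact: Xs].
case: X0 => [X0|FX].
  exists Y; split; first by right.
  move=> x; rewrite inE => /orP[/eqP->|/Xs]; [by right|rewrite X0 => -[Jx|//]; by left].
case: (tot X Y FX FY) => XY.
  exists Y; split; first by right.
  by move=> x; rewrite inE => /orP[/eqP->|/Xs [Jx|Xx]]; [right|left|right; apply: XY].
exists X; split; first by right.
by move=> x; rewrite inE => /orP[/eqP->|/Xs]; [right; apply: XY|].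
Qed.

Lemma extend_basis J S : lin_indep J -> exists M,
  [/\ J `<=` M, M `<=` J `|` S, lin_indep M & S `<=` span2 M].
Proof.
move=> iJ.
have [Fm FP tot|X [[XS iX] Xmax]] := @Zorn_bigcup V [set X | X `<=` S /\ lin_indep (J `|` X)].
  split.
    by move=> x [X FX Xx]; case: (FP X FX) => XS _; apply: XS.
  move=> s c us sJF s0 x xs.
  have [X [X0 Xs]] := @chain_seq V J Fm s tot sJF.
  case: X0 => [X0|FX].
    apply: (iJ s c us _ s0 x xs) => y ys; case: (Xs y ys) => //; rewrite X0 => -[].
  by case: (FP X FX) => _ iX; apply: (iX s c us Xs s0).
exists (J `|` X); split.
- by move=> x Jx; left.
- by move=> x [Jx|Xx]; [left|right; apply: XS].
- exact: iX.
move=> y Sy; apply: contrapT => nsy.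
apply: (Xmax (X `|` [set y])); last first.
  split; first by move=> x [/XS|->].
  by rewrite setUA; apply: indep_add.
split; first by move=> x Xx; left.
move=> /(_ y (or_intror erefl)) Xy; apply: nsy; apply: span2_sub; by right.
Qed.

End LinAlg.

Local Open Scope card_scope.

Lemma le_surj {T U} (A : set T) (B : set U) (g : U -> T) :
  A `<=` g @` B -> A #<= B.
Proof.
move=> AgB; have : $|{surj B >-> A}| by apply/surjPex; exists g.
by case=> h; exact: surj_card_ge h.
Qed.

Lemma surj_le {T U} (x0 : T) (A : set T) (B : set U) :
  A #<= B -> exists g : U -> T, A `<=` g @` B.
Proof.
move=> /ocard_geP[h]; exists (fun u => odflt x0 (h u)).
move=> a Aa; have : [set Some x | x in A] (Some a) by exists a.
move=> /('surj_h) [b Bb hb].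
by exists b => //; rewrite hb.
Qed.

Lemma inj_le {T U} (x0 : T) (u0 : U) (A : set T) (B : set U) :
  A #<= B -> exists h : T -> U,
    (forall a, A a -> B (h a)) /\ (forall a a', A a -> A a' -> h a = h a' -> a = a').
Proof.
move=> /(surj_le x0)[g AgB].
have /choice[h hP] : forall a, exists b : U, A a -> B b /\ g b = a.
  move=> a; have [Aa|nAa] := pselect (A a).
    by have [b Bb gb] := AgB a Aa; exists b.
  by exists u0.
exists h; split; first by move=> a /[dup] /hP [].
move=> a a' Aa Aa' e; have [_ <-] := hP a Aa; have [_ <-] := hP a' Aa'.
by rewrite e.
Qed.

Lemma le_section {T U} (x0 : T) (u0 : U) (A : set T) (B : set U) :
  A #<= B -> exists Z, [/\ Z `<=` B, A #<= Z & Z #<= A].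
Proof.
move=> /(inj_le x0 u0)[h [hB hinj]].
exists (h @` A); split; first by move=> _ [a Aa <-]; exact: hB.
  have /choice[g gP] : forall u, exists a : T, (exists2 a', A a' & h a' = u) -> A a /\ h a = u.
    move=> u; have [[a' Aa' e]|nu] := pselect (exists2 a', A a' & h a' = u).
      by exists a'.
    by exists x0.
  apply: (@le_surj _ _ _ _ g) => a Aa; exists (h a); first by exists a.
  have [Ag e] := gP (h a) (ex_intro2 _ _ a Aa erefl).
  exact: hinj.
exact: card_image_le.
Qed.

Lemma card_le_total {T U} (t0 : T) (u0 : U) (A : set T) (B : set U) :
  A #<= B \/ B #<= A.
Proof.
pose good (R : set (T * U)) := [/\ forall a b, R (a, b) -> A a /\ B b,
  forall a b b', R (a, b) -> R (a, b') -> b = b' &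
  forall a a' b, R (a, b) -> R (a', b) -> a = a'].
have common : forall (Fm : set (set (T * U))), total_on Fm subset ->
    forall p q, (\bigcup_(X in Fm) X) p -> (\bigcup_(X in Fm) X) q ->
    exists2 X, Fm X & X p /\ X q.
  move=> Fm tot p q [X FX Xp] [Y FY Yq].
  case: (tot X Y FX FY) => XY; first by exists Y => //; split => //; apply: XY.
  by exists X => //; split => //; apply: XY.
have [Fm FP tot|R [[RAB Rf Ri] Rmax]] := @Zorn_bigcup (T * U) good.
  split.
  - by move=> a b [X FX Xab]; case: (FP X FX) => H _ _; apply: H.
  - move=> a b b' p q; have [X FX [Xp Xq]] := common Fm tot _ _ p q.
    by case: (FP X FX) => _ H _; apply: H Xp Xq.
  - move=> a a' b p q; have [X FX [Xp Xq]] := common Fm tot _ _ p q.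
    by case: (FP X FX) => _ _ H; apply: H Xp Xq.
have [domA|ndomA] := pselect (forall a, A a -> exists b, R (a, b)).
  left.
  have /choice[g gP] : forall b, exists a : T, (exists a', R (a', b)) -> R (a, b).
    move=> b; have [[a' e]|nu] := pselect (exists a', R (a', b)).
      by exists a'.
    by exists t0.
  apply: (@le_surj _ _ _ _ g) => a Aa; have [b Rab] := domA a Aa.
  exists b; first by case: (RAB a b Rab).
  exact: (Ri _ _ b (gP b (ex_intro _ a Rab)) Rab).
have [ranB|nranB] := pselect (forall b, B b -> exists a, R (a, b)).
  right.
  have /choice[g gP] : forall a, exists b : U, (exists b', R (a, b')) -> R (a, b).
    move=> a; have [[b' e]|nu] := pselect (exists b', R (a, b')).
      by exists b'.
    by exists u0.
  apply: (@le_surj _ _ _ _ g) => b Bb; have [a Rab] := ranB b Bb.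
  exists a; first by case: (RAB a b Rab).
  exact: (Rf a _ b (gP a (ex_intro _ b Rab)) Rab).
exfalso.
have [a [Aa na]] : exists a, A a /\ ~ exists b, R (a, b).
  apply: contrapT => H; apply: ndomA => a Aa; apply: contrapT => nb.
  by apply: H; exists a.
have [b [Bb nb]] : exists b, B b /\ ~ exists a, R (a, b).
  apply: contrapT => H; apply: nranB => b Bb; apply: contrapT => nb.
  by apply: H; exists b.
apply: (Rmax (R `|` [set (a, b)])).
  split; first by move=> p Rp; left.
  move=> /(_ (a, b) (or_intror erefl)) Rab; apply: na; by exists b.
split.
- by move=> a' b' [/RAB//|[-> ->]].
- move=> a1 b1 b2 [p|[e1 e2]] [q|[e3 e4]].
  + exact: Rf p q.
  + by exfalso; apply: na; exists b1; rewrite -e3.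
  + by exfalso; apply: na; exists b2; rewrite -e1.
  + by rewrite e2 e4.
- move=> a1 a2 b1 [p|[e1 e2]] [q|[e3 e4]].
  + exact: Ri p q.
  + by exfalso; apply: nb; exists a1; rewrite -e4.
  + by exfalso; apply: nb; exists a2; rewrite -e2.
  + by rewrite e1 e3.
Qed.

Lemma triple_eq {A B C : Type} {a a' : A} {b b' : B} {c c' : C} :
  (a, b, c) = (a', b', c') -> [/\ a = a', b = b' & c = c'].
Proof. by case=> -> -> ->. Qed.

Lemma card_mul_nat (T : choiceType) (P : set T) :
  infinite_set P -> (P `*` [set: nat]) #<= P.
Proof.
move=> Pinf.
pose good (E : set (T * nat * T)) := [/\ forall i n x, E (i, n, x) -> P x,
  forall i n x y, E (i, n, x) -> E (i, n, y) -> x = y,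
  forall i j n m x, E (i, n, x) -> E (j, m, x) -> i = j /\ n = m,
  forall i n x m, E (i, n, x) -> exists y, E (i, m, y) &
  forall i n x, E (i, n, x) -> E (i, 0%N, i)].
have common : forall (Fm : set (set (T * nat * T))), total_on Fm subset ->
    forall p q, (\bigcup_(X in Fm) X) p -> (\bigcup_(X in Fm) X) q ->
    exists2 X, Fm X & X p /\ X q.
  move=> Fm tot p q [X FX Xp] [Y FY Yq].
  case: (tot X Y FX FY) => XY; first by exists Y => //; split => //; apply: XY.
  by exists X => //; split => //; apply: XY.
have [Fm FP tot|E [[EP Ef Ei Et E0] Emax]] := @Zorn_bigcup (T * nat * T) good.
  split.
  - by move=> i n x [X FX Xp]; case: (FP X FX) => H _ _ _ _; apply: H Xp.
  - move=> i n x y p q; have [X FX [Xp Xq]] := common Fm tot _ _ p q.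
    by case: (FP X FX) => _ H _ _ _; apply: H Xp Xq.
  - move=> i j n m x p q; have [X FX [Xp Xq]] := common Fm tot _ _ p q.
    by case: (FP X FX) => _ _ H _ _; apply: H Xp Xq.
  - move=> i n x m [X FX Xp]; case: (FP X FX) => _ _ _ H _.
    by have [y Xy] := H _ _ _ m Xp; exists y; exists X.
  - move=> i n x [X FX Xp]; case: (FP X FX) => _ _ _ _ H.
    by exists X => //; apply: H Xp.
pose R := [set x | exists i n, E (i, n, x)].
pose L := P `\` R.
have Lfin : finite_set L.
  apply: contrapT => /infiniteP /(surj_le 0%N)[g gL].
  have /choice[phi phiP] : forall n : nat, exists x : T, L x /\ g x = n.
    by move=> n; have [x Lx gx] := gL n I; exists x.
  have phiinj : forall n m, phi n = phi m -> n = m.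
    by move=> n m e; rewrite -(proj2 (phiP n)) -(proj2 (phiP m)) e.
  pose E' := E `|` [set t | exists n, t = (phi 0%N, n, phi n)].
  have nR : forall n, ~ R (phi n) by move=> n; case: (phiP n) => -[].
  apply: (Emax E').
    split; first by move=> t Et'; left.
    move=> /(_ (phi 0%N, 0%N, phi 0%N) (or_intror (ex_intro _ 0%N erefl))) H.
    by apply: (nR 0%N); exists (phi 0%N), 0%N.
  split.
  - move=> i n x [/EP//|[k e]]; case: (triple_eq e) => _ _ ->.
    by case: (phiP k) => -[].
  - move=> i n x y [p|[k /triple_eq[ei en ex]]] [q|[k' /triple_eq[ei' en' ey]]].
    + exact: Ef p q.
    + by exfalso; apply: (nR 0%N); rewrite -ei'; exists i, 0%N; apply: E0 p.
    + by exfalso; apply: (nR 0%N); rewrite -ei; exists i, 0%N; apply: E0 q.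
    + by rewrite ex ey -en -en'.
  - move=> i j n m x [p|[k /triple_eq[ei en ex]]] [q|[k' /triple_eq[ej em ex']]].
    + exact: Ei p q.
    + by exfalso; apply: (nR k'); rewrite -ex'; exists i, n.
    + by exfalso; apply: (nR k); rewrite -ex; exists j, m.
    + by split; [rewrite ei ej|rewrite en em; apply: phiinj; rewrite -ex -ex'].
  - move=> i n x m [p|[k /triple_eq[ei en ex]]].
      by have [y Ey] := Et _ _ _ m p; exists y; left.
    by exists (phi m); right; exists m; rewrite ei.
  - move=> i n x [p|[k /triple_eq[ei en ex]]]; first by left; apply: E0 p.
    by right; exists 0%N; rewrite ei.
have [i0 Ei0] : exists i0, E (i0, 0%N, i0).
  apply: contrapT => nE; apply: Pinf; apply: sub_finite_set Lfin.
  move=> x Px; split => // -[i [n Ein]]; apply: nE; exists i; exact: E0 Ein.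
have [X LX] := (finite_fsetP).1 Lfin.
pose s : seq T := finmap.enum_fset X.
have /choice[ee eeP] : forall p : T * nat, exists y : T, (exists x, E (p.1, p.2, x)) -> E (p.1, p.2, y).
  move=> [i n]; have [[x Ex]|nx] := pselect (exists x, E (i, n, x)).
    by exists x.
  by exists i.
have /choice[dec decP] : forall x : T, exists p : T * nat, R x -> E (p.1, p.2, x).
  move=> x; have [[i [n Ex]]|nx] := pselect (R x).
    by exists (i, n).
  by exists (x, 0%N).
pose g (x : T) : T * nat := let: (i, k) := dec x in
  let: (a, b) := Cantor.of_nat k./2 in
  if odd k then (nth x s a, b) else (ee (i, a), b).
apply: (@le_surj _ _ _ _ g) => -[y m] [/= Py _].
have decE : forall i k x, E (i, k, x) -> dec x = (i, k).
  move=> i k x Ex; have /= := decP x (ex_intro _ i (ex_intro _ k Ex)).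
  by case: (dec x) => i' k' /= Ex'; have [-> ->] := Ei _ _ _ _ _ Ex' Ex.
have [[i [n Ey]]|nRy] := pselect (R y).
  move: (Cantor.to_nat (n, m)) (Cantor.cancel_of_to (n, m)) => c cE.
  pose k := c.*2.
  have [z Ez] := Et _ _ _ k Ey.
  have Eee : E (i, k, ee (i, k)) by apply: (eeP (i, k)); exists z.
  exists (ee (i, k)); first exact: EP Eee.
  have hk : k./2 = c.
    by rewrite /k -[X in X./2]add0n -[0%N]/(nat_of_bool false) half_bit_double.
  rewrite /g (decE _ _ _ Eee) hk cE /k odd_double /=.
  have Een : E (i, n, ee (i, n)) by apply: (eeP (i, n)); exists y.
  by rewrite (Ef _ _ _ _ Een Ey).
have yX : y \in s.
  have : L y by split.
  by rewrite LX.
move: (Cantor.to_nat (index y s, m)) (Cantor.cancel_of_to (index y s, m)) => c cE.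
pose k := c.*2.+1.
have [z Ez] := Et _ _ _ k Ei0.
have Eee : E (i0, k, ee (i0, k)) by apply: (eeP (i0, k)); exists z.
exists (ee (i0, k)); first exact: EP Eee.
have hk : k./2 = c.
  by rewrite /k -[X in X./2]add1n -[1%N]/(nat_of_bool true) half_bit_double.
have ok : odd k by rewrite /k /= odd_double.
rewrite /g (decE _ _ _ Eee) hk cE ok.
by rewrite nth_index.
Qed.

Lemma union_le {T} {U : choiceType} (x0 : T) (A B : set T) (D : set U) :
  A #<= D -> B #<= D -> infinite_set D -> A `|` B #<= D.
Proof.
move=> /(surj_le x0)[gA hA] /(surj_le x0)[gB hB] Dinf.
apply: (@card_le_trans _ _ _ (D `*` [set: nat])); last exact: card_mul_nat.
apply: (@le_surj _ _ _ _ (fun p : U * nat => if p.2 == 0%N then gA p.1 else gB p.1)).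
move=> x [/hA[d Dd <-]|/hB[d Dd <-]]; first by exists (d, 0%N).
by exists (d, 1%N).
Qed.

Section Dim.
Variables (F : fieldType) (V : lmodType F).
Implicit Types (S A B M P : set V).

Lemma basis_le M P : lin_indep M -> M `<=` span2 P -> P `<=` span2 M ->
  (finite_set P -> finite_set M) /\ (infinite_set P -> M #<= P).
Proof.
move=> iM MP PM.
have /choice[rep repP] : forall p : V, exists sc : seq V * (V -> F), P p ->
    [/\ uniq sc.1, (forall x, x \in sc.1 -> M x) & p = \sum_(x <- sc.1) sc.2 x *: x].
  move=> p; have [Pp|nPp] := pselect (P p); last by exists ([::], fun _ => 0).
  have [s [c [us sM pE]]] := span2_uniq (PM p Pp); by exists (s, c).
pose U := \bigcup_(p in P) [set x | x \in (rep p).1].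
have MU : M `<=` U.
  move=> q Mq; apply: contrapT => nUq.
  apply: (indep_notin iM Mq); apply: (span2_mono (S := U)).
    move=> x [p Pp xin]; split; first by case: (repP p Pp) => _ H _; apply: H.
    by move=> /= xq; apply: nUq; rewrite -xq; exists p.
  apply: (span2_closed (S := P)); last exact: MP.
  move=> p Pp; have [_ _ ->] := repP p Pp.
  apply: span2_sum => x xin; apply/span2_scale/span2_sub; by exists p.
split.
  move=> Pfin; apply: (@sub_finite_set _ M U MU); apply: bigcup_finite => // p _.
move=> Pinf; apply: (card_le_trans (subset_card_le MU)).
apply: (@card_le_trans _ _ _ (P `*` [set: nat])); last exact: card_mul_nat.
apply: (@le_surj _ _ _ _ (fun pn : V * nat => nth 0 (rep pn.1).1 pn.2)).
move=> x [p Pp xin]; exists (p, index x (rep p).1) => //=.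
exact: nth_index.
Qed.

Lemma mono_le Z P : lin_indep Z -> Z `<=` span2 P -> infinite_set Z -> Z #<= P.
Proof.
move=> iZ ZP Zinf.
have [M [ZM MZP iM PM]] := extend_basis P iZ.
have MP : M `<=` span2 P.
  by move=> x /MZP [/ZP|/span2_sub].
have [Hfin Hinf] := basis_le iM MP PM.
have Pinf : infinite_set P.
  by move=> /Hfin Mfin; apply: Zinf; apply: sub_finite_set Mfin.
exact: (card_le_trans (subset_card_le ZM) (Hinf Pinf)).
Qed.

Lemma basis_span2 W B : is_basis W B -> [/\ B `<=` W, lin_indep B & span2 B = W].
Proof. by case=> BW [iB sB]; split => //; rewrite -span_span2. Qed.

Lemma complement (V1 K : set V) : subspace V1 -> subspace K -> exists V2,
  [/\ subspace V2, V2 `<=` K, V1 `&` V2 `<=` [set 0] &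
      forall k, K k -> exists x y, [/\ V1 x, V2 y & k = x + y]].
Proof.
move=> [V10 [V1add V1sc]] [K0 [Kadd Ksc]].
pose good (X : set V) := [/\ X `<=` K, forall x y, X x -> X y -> X (x + y),
  forall (a : F) x, X x -> X (a *: x) & X `&` V1 `<=` [set 0]].
have common : forall (Fm : set (set V)), total_on Fm subset ->
    forall p q, (\bigcup_(X in Fm) X) p -> (\bigcup_(X in Fm) X) q ->
    exists2 X, Fm X & X p /\ X q.
  move=> Fm tot p q [X FX Xp] [Y FY Yq].
  case: (tot X Y FX FY) => XY; first by exists Y => //; split => //; apply: XY.
  by exists X => //; split => //; apply: XY.
have [Fm FP tot|X [[XK Xadd Xsc XV1] Xmax]] := @Zorn_bigcup V good.
  split.
  - by move=> x [X FX Xx]; case: (FP X FX) => H _ _ _; apply: H.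
  - move=> x y p q; have [X FX [Xp Xq]] := common Fm tot _ _ p q.
    by exists X => //; case: (FP X FX) => _ H _ _; apply: H.
  - move=> a x [X FX Xx]; exists X => //; case: (FP X FX) => _ _ H _; exact: H.
  - move=> x [[X FX Xx] V1x]; case: (FP X FX) => _ _ _ H; exact: H.
pose V2 := X `|` [set 0].
have V2K : V2 `<=` K by move=> x [/XK//|->].
have V2add : forall x y, V2 x -> V2 y -> V2 (x + y).
  move=> x y [Xx|->] [Xy|->]; rewrite ?addr0 ?add0r; by [left; apply: Xadd|left|left|right].
have V2sc : forall (a : F) x, V2 x -> V2 (a *: x).
  by move=> a x [Xx|->]; [left; apply: Xsc|right; rewrite scaler0].
exists V2; split => //.
- by split; [right|split].
- by move=> x [V1x [Xx|->]] //; apply: XV1.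
move=> k Kk; apply: contrapT => nk.
pose X' := [set z | exists y (a : F), V2 y /\ z = y + a *: k].
apply: (Xmax X').
  split; first by move=> x Xx; exists x, 0; split; [left|rewrite scale0r addr0].
  move=> /(_ k (ex_intro _ 0 (ex_intro _ 1 (conj (or_intror erefl) _)))).
  move=> /(_ ltac:(by rewrite add0r scale1r)) Xk.
  by apply: nk; exists 0, k; split => //; [left|rewrite add0r].
split.
- by move=> _ [y [a [V2y ->]]]; apply: Kadd; [apply: V2K|apply: Ksc].
- move=> _ _ [y1 [a1 [V2y1 ->]]] [y2 [a2 [V2y2 ->]]].
  exists (y1 + y2), (a1 + a2); split; first exact: V2add.
  by rewrite scalerDl addrACA.
- move=> b _ [y [a [V2y ->]]]; exists (b *: y), (b * a); split; first exact: V2sc.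
  by rewrite scalerDr scalerA.
move=> z [[y [a [V2y ->]]] V1z].
have [a0|an0] := eqVneq a 0.
  move: V1z; rewrite a0 scale0r addr0 => V1y.
  by case: V2y => [Xy|->//]; apply: XV1.
exfalso; apply: nk; exists (a^-1 *: (y + a *: k)), (- (a^-1) *: y); split.
- exact: V1sc.
- exact: V2sc.
by rewrite scalerDr scalerA mulVf // scale1r scaleNr addrC addrA addNr add0r.
Qed.

End Dim.

Definition shf (F : fieldType) (V : lmodType F) (u : {linear V -> V}) (lam : F) (x : V) :=
  u x - lam *: x.

Lemma shf_sum (F : fieldType) (V : lmodType F) (u : {linear V -> V}) (lam : F)
  (I : Type) (r : seq I) (G : I -> V) :
  shf u lam (\sum_(i <- r) G i) = \sum_(i <- r) shf u lam (G i).
Proof. by rewrite /shf linear_sum scaler_sumr -sumrB. Qed.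

Lemma shfZ (F : fieldType) (V : lmodType F) (u : {linear V -> V}) (lam : F) a x :
  shf u lam (a *: x) = a *: shf u lam x.
Proof. by rewrite /shf linearZ scalerBr !scalerA mulrC. Qed.

Lemma shfD (F : fieldType) (V : lmodType F) (u : {linear V -> V}) (lam : F) x y :
  shf u lam (x + y) = shf u lam x + shf u lam y.
Proof. by rewrite /shf linearD scalerDr opprD addrACA. Qed.

Lemma shfB (F : fieldType) (V : lmodType F) (u : {linear V -> V}) (lam : F) x y :
  shf u lam (x - y) = shf u lam x - shf u lam y.
Proof. by rewrite -[x in RHS](subrK y x) [in RHS]shfD addrK. Qed.

Lemma shf0 (F : fieldType) (V : lmodType F) (u : {linear V -> V}) (lam : F) :
  shf u lam 0 = 0.
Proof. by rewrite /shf linear0 scaler0 subr0. Qed.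

Local Close Scope card_scope.
Unset Implicit Arguments.
Theorem lemma2 (F : fieldType) (V : lmodType F) (u : {linear V -> V})
    (lambda : F) :
  infinite_dim [set: V] ->
  dominant_eigenvalue_on u [set: V] lambda ->
  infinite_dim (shifted_image u lambda [set: V]) ->
  exists V1 V2 : set V,
    [/\ subspace V1, subspace V2,
        V1 `&` V2 = [set 0] &
        (forall v, exists x1 x2, V1 x1 /\ V2 x2 /\ v = x1 + x2)] /\
    (u @` V1 `<=` V1 /\ u @` V2 `<=` V2) /\
    [/\ infinite_dim V1,
        (forall mu : F, ~ dominant_eigenvalue_on u V1 mu) &
        (forall x, V2 x -> u x = lambda *: x)].
Proof.
move=> _ [B1 [B2 [bB1 [bB2 [_ nB2B1]]]]] [BW [bBW BWinf]].
pose f := shf u lambda.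
have [B1W iB1 sB1] := basis_span2 bB1.
have [_ iB2 sB2] := basis_span2 bB2.
have [BWW iBW sBW] := basis_span2 bBW.
set W := shifted_image u lambda [set: V] in B1W sB1 BWW sBW *.
have Wf : forall x, W (f x) by move=> x; exists x.
have fW : forall w, W w -> exists x, f x = w by move=> w [x _ <-]; exists x.
have B1inf : infinite_set B1.
  move=> B1fin; apply: BWinf.
  have BWB1 : BW `<=` span2 B1 by rewrite sB1.
  have B1BW : B1 `<=` span2 BW by rewrite sBW.
  have [H _] := basis_le iBW BWB1 B1BW.
  exact: H.
have /choice[c cP] : forall b : V, exists x : V, W b -> f x = b.
  move=> b; have [Wb|nWb] := pselect (W b); last by exists 0.
  by have [x fx] := fW b Wb; exists x.
have fc : forall b, B1 b -> f (c b) = b by move=> b /B1W; exact: cP.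
pose C0 := c @` B1.
have C0inf : infinite_set C0.
  move=> C0fin; apply: B1inf; apply: (card_le_finite _ C0fin).
  apply: (@le_surj _ _ _ _ f) => b B1b; exists (c b); [by exists b|exact: fc].
have iC0 : lin_indep C0.
  move=> s a us sC s0.
  have fs : forall x, x \in s -> c (f x) = x.
    by move=> x /sC [b B1b <-]; rewrite fc.
  have uf : uniq (map f s).
    rewrite map_inj_in_uniq // => x y xs ys e.
    by rewrite -(fs x xs) -(fs y ys) e.
  have sum0 : \sum_(y <- map f s) a (c y) *: y = 0.
    rewrite big_map (eq_big_seq (fun x => a x *: f x)); last first.
      by move=> x xs; rewrite fs.
    by rewrite /f -(eq_bigr _ (fun x _ => shfZ u lambda (a x) x)) -shf_sum s0 shf0.
  move=> x xs; rewrite -(fs x xs).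
  apply: (iB1 _ _ uf _ sum0); last exact: map_f.
  by move=> y /mapP[z zs ->]; case: (sC z zs) => b B1b <-; rewrite fc.
pose K := [set x | f x = 0].
have VCK : forall v, exists w k, [/\ span2 C0 w, K k & v = w + k].
  move=> v; have := Wf v; rewrite -sB1 => /span2_uniq [s [a [us sB vE]]].
  exists (\sum_(b <- s) a b *: c b), (v - \sum_(b <- s) a b *: c b); split.
  - apply: span2_sum => b bs; apply/span2_scale/span2_sub; exists b => //; exact: sB.
  - rewrite /K /= /f shfB shf_sum -/f vE; apply/eqP; rewrite subr_eq0; apply/eqP.
    apply: eq_big_seq => b bs; rewrite /f shfZ -/f fc //; exact: sB.
  - by rewrite addrC subrK.
have Ksub : subspace K.
  split; first exact: shf0.
  split => [x y Kx Ky|a x Kx]; rewrite /K /= /f ?shfD ?shfZ -/f.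
    by rewrite Kx Ky addr0.
  by rewrite Kx scaler0.
have indep0 : lin_indep (@set0 V) by move=> s a _ s0 _ x xs; case: (s0 x xs).
have [M [_ MK0 iM KM]] := extend_basis K indep0.
have MK : M `<=` K by move=> x /MK0 [[]|].
have B1M : (B1 #<= M)%card.
  case: (card_le_total 0 0 B1 M) => // MB1; exfalso; apply: nB2B1.
  have CMinf : infinite_set (C0 `|` M).
    move=> fin; apply: C0inf; apply: sub_finite_set fin; by move=> x Cx; left.
  have CMB2 : C0 `|` M `<=` span2 B2 by rewrite sB2.
  have B2CM : B2 `<=` span2 (C0 `|` M).
    move=> v _; have [w [k [Cw Kk ->]]] := VCK v.
    apply: span2_add.
      by apply: (span2_mono _ Cw) => x Cx; left.
    by apply: (span2_mono _ (KM k Kk)) => x Mx; right.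
  have [_ H] := basis_le iB2 B2CM CMB2.
  apply: (card_le_trans (H CMinf)).
  apply: (union_le 0 _ _ B1inf); first exact: card_image_le.
  exact: MB1.
have [Z [ZM B1Z ZB1]] := le_section 0 0 B1M.
have iZ : lin_indep Z by apply: indep_sub ZM iM.
have ZK : Z `<=` K by move=> x /ZM /MK.
have Zinf : infinite_set Z by move=> Zfin; apply: B1inf; exact: card_le_finite B1Z Zfin.
pose S := B1 `|` C0 `|` Z.
pose V1 := span2 S.
have C0S : C0 `<=` S by move=> x Cx; left; right.
have B1S : B1 `<=` S by move=> x Bx; left; left.
have ZS : Z `<=` S by move=> x Zx; right.
have [V2 [sV2 V2K V12 dec]] := complement (span2_subspace S) Ksub.
have V2u : forall x, V2 x -> u x = lambda *: x.
  move=> x /V2K; rewrite /K /= /f /shf => /eqP; rewrite subr_eq0 => /eqP.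
  done.
exists V1, V2; split.
  split.
  - exact: span2_subspace.
  - exact: sV2.
  - rewrite eqEsubset; split => // x ->; split; first exact: span2_0.
    by case: sV2.
  - move=> v; have [w [k [Cw Kk ->]]] := VCK v.
    have [x [y [V1x V2y ->]]] := dec k Kk.
    exists (w + x), y; split; last split => //; last by rewrite addrA.
    by apply: span2_add => //; exact: span2_mono C0S _ Cw.
split.
  split.
    move=> _ [x V1x <-].
    have -> : u x = f x + lambda *: x by rewrite /f /shf subrK.
    apply: span2_add; last exact: span2_scale.
    apply: (span2_mono B1S); rewrite sB1; exact: Wf.
  move=> _ [y V2y <-]; rewrite V2u //; by case: sV2 => _ [_ H]; apply: H.
split => //.
- have [M1 [C0M1 M1C0S iM1 SM1]] := extend_basis S iC0.
  exists M1; split; last first.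
    by move=> M1fin; apply: C0inf; exact: sub_finite_set C0M1 M1fin.
  split.
    by move=> x /M1C0S [/C0S|] Sx; apply: span2_sub.
  split => //; rewrite span_span2 eqEsubset; split.
    apply: span2_closed => x /M1C0S [/C0S|] Sx; exact: span2_sub.
  exact: span2_closed SM1.
move=> mu [P [Q [bP [bQ [PQ nQP]]]]]; apply: nQP.
have [PY iP sP] := basis_span2 bP.
have [QV1 iQ sQ] := basis_span2 bQ.
have Sinf : infinite_set S.
  by move=> Sfin; apply: B1inf; exact: sub_finite_set B1S Sfin.
have QSs : Q `<=` span2 S by move=> x /QV1.
have SQs : S `<=` span2 Q by rewrite sQ => x Sx; exact: span2_sub.
have [_ HQS] := basis_le iQ QSs SQs.
have QS : (Q #<= S)%card by exact: HQS Sinf.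
have SB1 : (S #<= B1)%card.
  apply: (union_le 0 _ _ B1inf) => //.
  apply: (union_le 0 _ _ B1inf); first exact: card_lexx.
  exact: card_image_le.
have B1P : (B1 #<= P)%card.
  have [ml|nml] := eqVneq mu lambda.
    apply: mono_le iB1 _ B1inf; rewrite sP => b B1b.
    exists (c b); first by apply/span2_sub/C0S; exists b.
    by rewrite ml; exact: fc.
  apply: (card_le_trans B1Z); apply: mono_le iZ _ Zinf; rewrite sP => z Zz.
  have lm : lambda - mu != 0 by rewrite subr_eq0 eq_sym.
  exists ((lambda - mu)^-1 *: z); first by apply/span2_scale/span2_sub/ZS.
  rewrite linearZ /= [mu *: _]scalerA mulrC -scalerA -scalerBr.
  have -> : u z = lambda *: z.
    by move: (ZK z Zz); rewrite /K /= /f /shf => /eqP; rewrite subr_eq0 => /eqP.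
  by rewrite -scalerBl scalerA mulVf // scale1r.
exact: (card_le_trans QS (card_le_trans SB1 B1P)).
Qed.
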